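(* Let $n\ge 2$, let $\mathcal{L}\subset\mathbb{R}^n$ be a tame lattice with Lagrangian basis $\{\mathbf{e}_1,\dots,\mathbf{e}_n\}$, $\mathbf{v}_1=\sum_i\mathbf{e}_i$, $a:=\langle\mathbf{e}_1,\mathbf{e}_1\rangle$, $h:=-\langle\mathbf{e}_1,\mathbf{e}_2\rangle$. Let $r,s$ be integers with $0\ne|r|<n$, $m=r+sn$, and suppose $$\frac{na-1}{n^2-1}\le\left(\frac{m}{r}\right)^2\le\frac{(na-1)(n+1)}{n-1}.$$ Then $$\delta(\mathcal{L}_{\mathbf{v}_1}^{(r,s)})=\frac{((na-1)r^2+m^2)^{n/2}}{2^n n^{n/2}(a+h)^{\frac{n-1}{2}}|mr^{n-1}|}.$$
   Context: Tame lattice: a full-rank lattice $\mathcal{L}\subset\mathbb{R}^n$ with a basis $\{\mathbf{e}_1,\dots,\mathbf{e}_n\}$ (Lagrangian basis) and nonzero $\mathbf{v}_1\in\mathcal{L}\cap\mathcal{L}^*$ such that $\sum_i\mathbf{e}_i=\mathbf{v}_1$, $\langle\mathbf{e}_i,\mathbf{v}_1\rangle=1$, $\langle\mathbf{e}_i,\mathbf{e}_i\rangle=a$, $\langle\mathbf{e}_i,\mathbf{e}_j\rangle=-h$ ($i\ne j$); then $a-h(n-1)=1$. $\mathcal{L}^{(r,s)}_{\mathbf{v}_1}$ is the image of $\mathcal{L}$ under $\mathbf{x}\mapsto r\mathbf{x}+s\langle\mathbf{x},\mathbf{v}_1\rangle\mathbf{v}_1$. The center density of a full-rank lattice $\Lambda\subset\mathbb{R}^n$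 is $\delta(\Lambda)=\lambda_1(\Lambda)^n/(2^n\operatorname{vol}(\Lambda))$, where $\lambda_1$ is the minimal nonzero vector norm. *)

(* Defs.v *)
From HB Require Import structures.
From mathcomp Require Import all_boot all_order all_algebra.
From mathcomp Require Import all_classical all_reals all_analysis.
Set Implicit Arguments. Unset Strict Implicit. Unset Printing Implicit Defensive.
Import Order.TTheory GRing.Theory Num.Theory.
Local Open Scope ring_scope.
Local Open Scope classical_set_scope.

Section Lattices.
Variables (R : realType) (n : nat).

Definition dotp (x y : 'rV[R]_n) : R := \sum_(i < n) x 0 i * y 0 i.
Definition vnorm (x : 'rV[R]_n) : R := Num.sqrt (dotp x x).

Definition lattice_of (B : 'M[R]_n) : set 'rV[R]_n :=
  [set x | exists z : 'rV[int]_n, x = map_mx (fun k : int => k%:~R) z *m B].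

Definition is_lattice_basis (L : set 'rV[R]_n) (B : 'M[R]_n) : Prop :=
  \det B != 0 /\ L = lattice_of B.

Definition full_rank_lattice (L : set 'rV[R]_n) : Prop :=
  exists B, is_lattice_basis L B.

Definition dual_lattice (L : set 'rV[R]_n) : set 'rV[R]_n :=
  [set x | forall y, L y -> exists z : int, dotp x y = z%:~R].

(* covolume: |det B| for a basis B of L (independent of the chosen basis) *)
Definition covol (L : set 'rV[R]_n) : R :=
  `|\det (xget 0 (is_lattice_basis L))|.

Definition lambda1 (L : set 'rV[R]_n) : R :=
  inf [set vnorm x | x in L `\ 0].

Definition center_density (L : set 'rV[R]_n) : R :=
  lambda1 L ^+ n / (2 ^+ n * covol L).

Definition tame_lattice (L : set 'rV[R]_n) (E : 'M[R]_n) (v1 : 'rV[R]_n)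
  (a h : R) : Prop :=
  [/\ is_lattice_basis L E, v1 != 0, L v1 /\ dual_lattice L v1,
      \sum_(i < n) row i E = v1 &
      forall i j : 'I_n,
        dotp (row i E) v1 = 1 /\
        dotp (row i E) (row j E) = (if i == j then a else - h)].

Definition twist (r s : int) (v1 x : 'rV[R]_n) : 'rV[R]_n :=
  r%:~R *: x + (s%:~R * dotp x v1) *: v1.

Definition twisted_lattice (r s : int) (v1 : 'rV[R]_n) (L : set 'rV[R]_n)
  : set 'rV[R]_n := twist r s v1 @` L.

End Lattices.

(* Main.v *)
Require Import Defs.
From HB Require Import structures.
From mathcomp Require Import all_boot all_order all_algebra.
From mathcomp Require Import all_classical all_reals all_analysis.
From mathcomp Require Import ring lra zify.
Import Order.TTheory GRing.Theory Num.Theory.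
Local Open Scope ring_scope.
Local Open Scope classical_set_scope.


Lemma det_rank1 (R : comRingType) n (u : 'M[R]_(n,1)) (v : 'M[R]_(1,n)) :
  \det (1%:M + u *m v) = 1 + (v *m u) 0 0.
Proof.
set A := block_mx 1%:M u (-v) 1%:M : 'M[R]_(n + 1).
set B := block_mx 1%:M 0 v 1%:M : 'M[R]_(n + 1).
have E1 : A *m B = block_mx (1%:M + u *m v) u 0 1%:M.
  rewrite /A /B mulmx_block !mul1mx !mulmx1.
  by rewrite add0r addNr mulmx0 add0r.
have E2 : B *m A = block_mx 1%:M u 0 (v *m u + 1%:M).
  rewrite /A /B mulmx_block !mul1mx !mulmx1.
  by rewrite mul0mx !addr0 subrr.
have dB : \det B = 1 by rewrite /B det_lblock !det1 mulr1.
have h1 := congr1 determinant E1; have h2 := congr1 determinant E2.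
rewrite det_mulmx dB mulr1 det_ublock det1 mulr1 in h1.
rewrite det_mulmx dB mul1r det_ublock det1 mul1r in h2.
rewrite -h1 h2 det_mx11 mxE addrC mxE eqxx mulr1n //.
Qed.

Section S2.
Variable R : realType.
Variable n : nat.

Definition iR (z : 'M[int]_(1,n)) : 'rV[R]_n := map_mx (fun k : int => k%:~R) z.

Lemma det_iR (U : 'M[int]_n) : \det (map_mx (fun k : int => (k%:~R : R)) U) = (\det U)%:~R.
Proof. by rewrite (det_map_mx (intr : {rmorphism int -> R})). Qed.

Lemma lattice_rows (B1 B2 : 'M[R]_n) : lattice_of B2 `<=` lattice_of B1 ->
  exists U : 'M[int]_n, B2 = map_mx (fun k : int => k%:~R) U *m B1.
Proof.
move=> sub.
have : forall i : 'I_n, exists z : 'rV[int]_n, row i B2 = map_mx (fun k : int => k%:~R) z *m B1.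
  move=> i; apply: sub; exists (delta_mx 0 i).
  by rewrite rowE (map_delta_mx (intr : {rmorphism int -> R})).
case/choice => f hf; exists (\matrix_(i, j) f i 0 j).
apply/row_matrixP => i; rewrite hf row_mul; congr (_ *m _).
by apply/rowP => j; rewrite !mxE.
Qed.

Lemma basis_det (L : set 'rV[R]_n) B1 B2 :
  is_lattice_basis L B1 -> is_lattice_basis L B2 -> `|\det B1| = `|\det B2|.
Proof.
move=> [d1 e1] [d2 e2].
have [U hU] : exists U : 'M[int]_n, B2 = map_mx (fun k : int => k%:~R) U *m B1.
  by apply: lattice_rows; rewrite -e1 -e2.
have [V hV] : exists U : 'M[int]_n, B1 = map_mx (fun k : int => k%:~R) U *m B2.
  by apply: lattice_rows; rewrite -e1 -e2.
have h2 : \det B2 = (\det U)%:~R * \det B1 by rewrite {1}hU det_mulmx det_iR.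
have h1 : \det B1 = (\det V)%:~R * \det B2 by rewrite {1}hV det_mulmx det_iR.
have : (\det V * \det U)%:~R = 1 :> R.
  apply: (mulIf d1); rewrite mul1r {2}h1 h2 mulrA intrM //.
rewrite -[1]/(1%:~R) => /eqP; rewrite eqr_int => /eqP hVU.
have : (`|\det U|%N == 1%N).
  by move: (congr1 absz hVU); rewrite abszM => /eqP; rewrite muln_eq1 => /andP [].
move=> /eqP hU1; rewrite h2 normrM.
suff -> : `|(\det U)%:~R : R| = 1 by rewrite mul1r.
by rewrite -intr_norm -abszE hU1.
Qed.
End S2.

Section S3.
Variable R : realType.
Variable n : nat.
Implicit Types x y z : 'rV[R]_n.

Lemma dotpC x y : dotp x y = dotp y x.
Proof. by apply: eq_bigr => i _; rewrite mulrC. Qed.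

Lemma dotpDl x y z : dotp (x + y) z = dotp x z + dotp y z.
Proof. by rewrite /dotp -big_split; apply: eq_bigr => i _; rewrite mxE mulrDl. Qed.

Lemma dotpZl k x y : dotp (k *: x) y = k * dotp x y.
Proof. by rewrite /dotp mulr_sumr; apply: eq_bigr => i _; rewrite mxE mulrA. Qed.

Lemma dotp_suml (I : finType) (F : I -> 'rV[R]_n) y :
  dotp (\sum_i F i) y = \sum_i dotp (F i) y.
Proof.
rewrite /dotp exchange_big /=; apply: eq_bigr => j _.
by rewrite summxE mulr_suml.
Qed.

Lemma dotp_ge0 x : 0 <= dotp x x.
Proof. by apply: sumr_ge0 => i _; rewrite -expr2 sqr_ge0. Qed.

Lemma dotp_eq0 x : dotp x x = 0 -> x = 0.
Proof.
move=> /eqP; rewrite /dotp psumr_eq0 => [/allP H|i _]; last by rewrite -expr2 sqr_ge0.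
apply/rowP => i; rewrite mxE; apply/eqP.
by have := H i (mem_index_enum i); rewrite -expr2 sqrf_eq0.
Qed.

Variables (E : 'M[R]_n) (v1 : 'rV[R]_n) (a h : R).
Hypothesis HE : forall i j : 'I_n,
        dotp (row i E) v1 = 1 /\
        dotp (row i E) (row j E) = (if i == j then a else - h).

Lemma dotp_comb_v1 (w : 'I_n -> R) :
  dotp (\sum_i w i *: row i E) v1 = \sum_i w i.
Proof.
by rewrite dotp_suml; apply: eq_bigr => i _; rewrite dotpZl (HE i i).1 mulr1.
Qed.

Lemma dotp_comb (w : 'I_n -> R) :
  dotp (\sum_i w i *: row i E) (\sum_i w i *: row i E) =
  (a + h) * \sum_i w i ^+ 2 - h * (\sum_i w i) ^+ 2.
Proof.
rewrite dotp_suml.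
transitivity (\sum_i w i * ((a + h) * w i - h * \sum_j w j)).
  apply: eq_bigr => i _; rewrite dotpZl; congr (_ * _).
  rewrite dotpC dotp_suml.
  transitivity (\sum_j ((a + h) * ((i == j)%:R * w j) - h * w j)).
    apply: eq_bigr => j _; rewrite dotpZl (HE j i).2 eq_sym.
    by case: eqP => _; rewrite ?mulr1n ?mulr0n; ring.
  rewrite sumrB -mulr_sumr -mulr_sumr; congr (_ * _ - _).
  rewrite (bigD1 i) //= eqxx mul1r big1 ?addr0 // => j /negbTE.
  by rewrite eq_sym => ->; rewrite mul0r.
transitivity (\sum_i ((a + h) * w i ^+ 2) - \sum_i (h * \sum_j w j) * w i).
  by rewrite -sumrB; apply: eq_bigr => i _; ring.
by rewrite -mulr_sumr -mulr_sumr expr2 mulrA.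
Qed.
End S3.

Section S4.
Variable n : nat.
Variable z : 'I_n -> int.
Let q := \sum_i z i ^+ 2.
Let t := \sum_i z i.

Lemma sum_ge_term (F : 'I_n -> int) i : (forall j, 0 <= F j) -> F i <= \sum_j F j.
Proof.
move=> h; rewrite (bigD1 i) //= -[X in X <= _]addr0 lerD2l.
by apply: sumr_ge0 => j _.
Qed.

Lemma q_ge1 i : z i != 0 -> 1 <= q.
Proof.
move=> hi; apply: le_trans (sum_ge_term _ i _); last by move=> j; apply: sqr_ge0.
move: hi; lia.
Qed.

Lemma CS : t ^+ 2 <= n%:R * q.
Proof.
have : 0 <= \sum_i \sum_j (z i - z j) ^+ 2.
  by apply: sumr_ge0 => i _; apply: sumr_ge0 => j _; apply: sqr_ge0.
have -> : \sum_i \sum_j (z i - z j) ^+ 2 = 2 * (n%:R * q - t ^+ 2).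
  transitivity (\sum_i (z i ^+ 2 * n%:R - 2 * z i * t + q)).
    apply: eq_bigr => i _.
    transitivity (\sum_j (z i ^+ 2 - 2 * z i * z j + z j ^+ 2)).
      by apply: eq_bigr => j _; ring.
    by rewrite big_split sumrB /= sumr_const card_ord -[z i ^+ 2 *+ n]mulr_natr -mulr_sumr.
  rewrite big_split sumrB /= -mulr_suml sumr_const card_ord -[q *+ n]mulr_natr -/q.
  rewrite -mulr_suml -mulr_sumr -/t; ring.
by rewrite pmulr_rge0 // subr_ge0.
Qed.

Lemma abs_le_sqr (x : int) : `|x| <= x ^+ 2.
Proof. rewrite expr2; case: (ltrP x 0) => hx; [rewrite ltr0_norm // | rewrite ger0_norm //]; nia. Qed.

Lemma tq : t ^+ 2 <= q ^+ 2.
Proof.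
have h1 : `|t| <= q.
  apply: le_trans (ler_norm_sum _ _ _) _; apply: ler_sum => i _; exact: abs_le_sqr.
have h0 : 0 <= `|t| by [].
rewrite -[t ^+ 2]ger0_norm ?sqr_ge0 // normrX.
move: h0 h1; set u := `|t|; nia.
Qed.

Lemma w_cases (x : int) : x * x - x != 0 -> 2 <= x * x - x.
Proof.
have : x <= -1 \/ x = 0 \/ x = 1 \/ 2 <= x by lia.
case=> [h|[->|[->|h]]] //; nia.
Qed.

Lemma w_ge0 (x : int) : 0 <= x * x - x.
Proof.
have : x <= 0 \/ 1 <= x by lia.
case=> h; nia.
Qed.

Lemma q_ge2 i : z i != 0 -> t = 0 -> 2 <= q.
Proof.
move=> hi ht.
have hqt : q - t = \sum_j (z j ^+ 2 - z j) by rewrite sumrB.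
case: (pickP (fun j => z j ^+ 2 - z j != 0)) => [j hj | hall].
  have w2 : 2 <= z j ^+ 2 - z j by move: hj; rewrite expr2; apply: w_cases.
  have : z j ^+ 2 - z j <= q - t.
    rewrite hqt; apply: sum_ge_term => k; rewrite expr2; apply: w_ge0.
  rewrite ht subr0; lia.
have : q - t = 0 by rewrite hqt big1 // => j _; apply/eqP; move: (hall j) => /= /negbFE.
have := q_ge1 i hi; rewrite ht; lia.
Qed.
End S4.

Lemma key_ineq (R : realFieldType) (N A M q T : R) :
  2 <= N -> 0 < A -> 0 <= M -> A <= (N + 1) * M -> M <= (N + 1) * A ->
  0 <= T -> T <= N * q -> T <= q ^+ 2 -> 1 <= q -> (1 <= T \/ 2 <= q) ->
  (N - 1) * A + M <= N * A * q + T * (M - A).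
Proof.
move=> hN hA hM h1 h2 hT hTN hTq hq h3.
case: (lerP A M) => hAM.
  case: h3 => h3.
    have : 0 <= (M - A) * (T - 1) by apply: mulr_ge0; lra.
    have : 0 <= N * A * (q - 1) by apply: mulr_ge0; [apply: mulr_ge0|]; lra.
    lra.
  have : 0 <= T * (M - A) by apply: mulr_ge0; lra.
  have : 0 <= N * A * (q - 2) by apply: mulr_ge0; [apply: mulr_ge0|]; lra.
  lra.
have hD : 0 < A - M by lra.
have e1 : T * (M - A) >= - ((A - M) * q ^+ 2).
  have : (A - M) * T <= (A - M) * q ^+ 2 by rewrite ler_pM2l.
  lra.
have e2 : T * (M - A) >= - ((A - M) * (N * q)).
  have : (A - M) * T <= (A - M) * (N * q) by rewrite ler_pM2l.
  lra.
case: (lerP q N) => hqN.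
  have : 0 <= (q - 1) * (N * A - (A - M) * (q + 1)).
    apply: mulr_ge0; first lra.
    have : (A - M) * (q + 1) <= (A - M) * (N + 1) by rewrite ler_pM2l //; lra.
    lra.
  rewrite expr2 in e1; lra.
have : 0 <= N * M * (q - N) by apply: mulr_ge0; [apply: mulr_ge0|]; lra.
have : 0 <= (N - 1) * ((N + 1) * M - A) by apply: mulr_ge0; lra.
lra.
Qed.


Lemma int_sq_ge1 (t : int) : t != 0 -> 1 <= t ^+ 2.
Proof.
move=> ht; rewrite expr2; have : t <= -1 \/ 1 <= t by move: ht; lia.
by case=> h'; nia.
Qed.

Lemma mx_dotp (R : realType) n (x v : 'rV[R]_n) : x *m v^T = (dotp x v)%:M.
Proof.
apply/matrixP => i j; rewrite !ord1 !mxE eqxx mulr1n.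
by apply: eq_bigr => k _; rewrite mxE.
Qed.

Lemma twist_mx (R : realType) n (r s : int) (v1 x : 'rV[R]_n) :
  twist r s v1 x = x *m (r%:~R%:M + s%:~R *: (v1^T *m v1)).
Proof.
rewrite /twist mulmxDr mul_mx_scalar -scalemxAr mulmxA mx_dotp mul_scalar_mx.
by rewrite scalerA.
Qed.

Lemma twist_norm (R : realType) n (r s : int) (v1 x : 'rV[R]_n) :
  dotp (twist r s v1 x) (twist r s v1 x) =
  r%:~R ^+ 2 * dotp x x + (2 * r%:~R * s%:~R + s%:~R ^+ 2 * dotp v1 v1) * dotp x v1 ^+ 2.
Proof.
rewrite /twist !dotpDl ![dotp _ (_ + _)]dotpC !dotpDl !dotpZl.
rewrite ![dotp _ (_ *: _)]dotpC !dotpZl [dotp v1 x]dotpC; ring.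
Qed.


Theorem mainTheorem3 (R : realType) (n : nat) (L : set 'rV[R]_n)
  (E : 'M[R]_n) (v1 : 'rV[R]_n) (a h : R) (r s : int) :
  (2 <= n)%N ->
  tame_lattice L E v1 a h ->
  r != 0 -> `|r| < n%:Z ->
  let m : int := r + s * n%:Z in
  (n%:R * a - 1) / (n%:R ^+ 2 - 1) <= (m%:~R / r%:~R) ^+ 2 <=
    (n%:R * a - 1) * (n%:R + 1) / (n%:R - 1) ->
  center_density (twisted_lattice r s v1 L) =
    ((n%:R * a - 1) * r%:~R ^+ 2 + m%:~R ^+ 2) `^ (n%:R / 2) /
    (2 ^+ n * n%:R `^ (n%:R / 2) * (a + h) `^ ((n%:R - 1) / 2)
       * `|m%:~R * r%:~R ^+ n.-1|).
Proof.
move=> n2 [[dE hL] v1nz [Lv1 _] hsum hE] r0 rlt m hyp.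
have n0 : (0 < n)%N by apply: leq_trans n2.
have n1 : (1 < n)%N by [].
pose i0 : 'I_n := Ordinal n0.
pose i1 : 'I_n := Ordinal n1.
have i01 : (i0 == i1) = false by [].
set N : R := n%:R.
have N2 : 2 <= N by rewrite /N (ler_nat R 2 n).
have v1E : v1 = \sum_i 1 *: row i E.
  by rewrite -hsum; apply: eq_bigr => i _; rewrite scale1r.
have sum1 : \sum_(i < n) (1 : R) = N by rewrite sumr_const card_ord.
have vv : dotp v1 v1 = N.
  by rewrite {1}v1E (@dotp_comb_v1 R n E v1 a h hE) sum1.
have hrel : a + h - h * N = 1.
  have := @dotp_comb R n E v1 a h hE (fun=> 1).
  rewrite -v1E vv (eq_bigr (fun=> 1)) => [|i _]; last by rewrite expr1n.
  rewrite sum1 => /eqP; rewrite -subr_eq0 => /eqP e.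
  have : N * (a + h - h * N - 1) = 0.
    by rewrite -[RHS]oppr0 -e; ring.
  move/eqP; rewrite mulf_eq0 => /orP [|]; first by rewrite /N pnatr_eq0 gtn_eqF.
  by rewrite subr_eq0 => /eqP.
have cpos : 0 < a + h.
  have e : dotp (row i0 E - row i1 E) (row i0 E - row i1 E) = 2 * (a + h).
    rewrite -scaleN1r !dotpDl ![dotp _ (_ + _)]dotpC !dotpDl !dotpZl.
    rewrite ![dotp _ ((-1) *: _)]dotpC !dotpZl !(hE _ _).2 !eqxx eq_sym i01.
    ring.
  have := @dotp_ge0 R n (row i0 E - row i1 E); rewrite le_eqVlt => /orP [/eqP e0|]; last by rewrite e; lra.
  have /eqP := @dotp_eq0 R n _ (esym e0); rewrite subr_eq0 => /eqP er.
  move/eqP: dE; case; apply: (determinant_alternate (negbT i01)) => j.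
  by have := congr1 (fun M : 'rV_n => M 0 j) er; rewrite !mxE.
have ha : a = 1 + h * N - h by lra.
have mR : (m%:~R : R) = r%:~R + s%:~R * N by rewrite /m intrD intrM.
have rz : (r%:~R : R) != 0 by rewrite intr_eq0.
have r2 : 0 < (r%:~R : R) ^+ 2 by rewrite lt0r sqrf_eq0 rz sqr_ge0.
have na1 : N * a - 1 = (N - 1) * (a + h) by rewrite ha; ring.
have N1 : N - 1 != 0 by apply/eqP; lra.
have Np1 : N + 1 != 0 by apply/eqP; lra.
have NN1 : N ^+ 2 - 1 != 0.
  by rewrite (_ : N ^+ 2 - 1 = (N - 1) * (N + 1)) ?mulf_neq0 //; ring.
case/andP: hyp; rewrite -/N na1 expr_div_n => hyp1 hyp2.
set M := (m%:~R : R) ^+ 2 in hyp1 hyp2.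
set A := (a + h) * (r%:~R : R) ^+ 2.
have hA : 0 < A by rewrite /A mulr_gt0.
have hM : 0 <= M by rewrite /M sqr_ge0.
have hAM : A <= (N + 1) * M.
  have pos : 0 <= (N + 1) * (r%:~R : R) ^+ 2 by apply: mulr_ge0; lra.
  have := ler_wpM2r pos hyp1.
  have -> : (N - 1) * (a + h) / (N ^+ 2 - 1) * ((N + 1) * r%:~R ^+ 2) = A.
    by rewrite /A; field; exact: NN1.
  have -> : M / r%:~R ^+ 2 * ((N + 1) * r%:~R ^+ 2) = (N + 1) * M.
    by field.
  by [].
have hMA : M <= (N + 1) * A.
  have pos : 0 <= (r%:~R : R) ^+ 2 by apply: ltW.
  have := ler_wpM2r pos hyp2.
  have -> : (N - 1) * (a + h) * (N + 1) / (N - 1) * r%:~R ^+ 2 = (N + 1) * A.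
    by rewrite /A; field.
  have -> : M / r%:~R ^+ 2 * r%:~R ^+ 2 = M.
    by field.
  by [].
have mz : (m%:~R : R) != 0.
  apply/eqP => m0; move: hAM; rewrite /M m0 expr0n /= mulr0; lra.
pose Tm := (r%:~R : R)%:M + s%:~R *: (v1^T *m v1) : 'M[R]_n.
have nS : n = n.-1.+1 by rewrite prednK.
have detTm : \det Tm = m%:~R * r%:~R ^+ n.-1.
  have -> : Tm = r%:~R *: (1%:M + ((s%:~R / r%:~R) *: v1^T) *m v1).
    rewrite scalerDr scalemx1 -scalemxAl scalerA mulrC divfK //.
  rewrite detZ det_rank1 -scalemxAr mxE mx_dotp mxE eqxx mulr1n vv mR.
  rewrite {1}nS exprS mulrAC; congr (_ * _).
  by rewrite mulrDr mulr1 mulrCA mulrA mulfVK.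
have hL' : twisted_lattice r s v1 L = lattice_of (E *m Tm).
  rewrite /twisted_lattice hL; apply/seteqP; split => y.
    by case=> x [z ->] <-; exists z; rewrite twist_mx mulmxA.
  by case=> z ->; exists (map_mx (fun k : int => k%:~R) z *m E); [exists z | rewrite twist_mx mulmxA].
have bas : is_lattice_basis (twisted_lattice r s v1 L) (E *m Tm).
  by split => //; rewrite det_mulmx detTm !mulf_neq0 // expf_neq0.
have covE : covol (twisted_lattice r s v1 L) = `|\det E| * `|m%:~R * r%:~R ^+ n.-1|.
  rewrite /covol (@basis_det R n _ _ _ (xgetPex 0 (ex_intro _ _ bas)) bas).
  by rewrite det_mulmx normrM detTm.
have c0 : a + h != 0 by rewrite gt_eqF.
have gram : E *m E^T = (a + h) *: (1%:M + ((- h / (a + h)) *: (const_mx 1 : 'cV[R]_n)) *m (const_mx 1 : 'rV[R]_n)).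
  apply/matrixP => i j.
  rewrite !mxE.
  have -> : \sum_j0 E i j0 * E^T j0 j = dotp (row i E) (row j E).
    by apply: eq_bigr => k _; rewrite !mxE.
  rewrite (hE i j).2 big_ord1 !mxE mulr1.
  case: eqP => _; rewrite ?mulr1n ?mulr0n ?add0r !mulr1 ?mulrDr ?mulr1 mulrCA divff // mulr1; ring.
have detE2 : \det E ^+ 2 = (a + h) ^+ n.-1.
  have := congr1 determinant gram.
  rewrite det_mulmx det_tr -expr2 => ->.
  rewrite detZ det_rank1 -scalemxAr.
  have sc : forall k (X : 'M[R]_1), (k *: X) 0 0 = k * X 0 0 by move=> k X; rewrite mxE.
  rewrite sc.
  have -> : ((const_mx 1 : 'rV[R]_n) *m (const_mx 1 : 'cV[R]_n)) 0 0 = N.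
    by rewrite mxE -sum1; apply: eq_bigr => k _; rewrite !mxE mul1r.
  rewrite {1}nS exprS mulrAC.
  have -> : (a + h) * (1 + - h / (a + h) * N) = a + h - h * N by field.
  by rewrite hrel mul1r.
have detE : `|\det E| = Num.sqrt (a + h) ^+ n.-1.
  apply/eqP; rewrite -(@eqrXn2 _ 2) // ?sqrtr_ge0 ?exprn_ge0 //.
  rewrite real_normK ?num_real // detE2 -exprM mulnC exprM sqr_sqrtr //.
  exact: ltW.
set T0 : R := r%:~R ^+ 2 * a + (2 * r%:~R * s%:~R + s%:~R ^+ 2 * N).
have N0 : 0 < N by lra.
have eT0 : N * T0 = (N - 1) * A + M by rewrite /T0 /A /M mR ha; ring.
have T0pos : 0 < T0.
  have hNA : 0 < (N - 1) * A by apply: mulr_gt0; lra.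
  have : 0 < N * T0 by rewrite eT0; lra.
  by rewrite pmulr_rgt0.
pose y0 := twist r s v1 (row i0 E).
have dy0 : dotp y0 y0 = T0.
  by rewrite /y0 twist_norm (hE i0 i0).1 (hE i0 i0).2 eqxx vv expr1n mulr1.
have Ly0 : twisted_lattice r s v1 L y0.
  exists (row i0 E) => //; rewrite hL; exists (delta_mx 0 i0).
  by rewrite rowE (map_delta_mx (intr : {rmorphism int -> R})).
have y0nz : y0 != 0.
  by apply/eqP => e; move: dy0; rewrite e /dotp big1 => [|j _]; [lra | rewrite mxE mul0r].
have lb : forall y, twisted_lattice r s v1 L y -> y != 0 -> T0 <= dotp y y.
  move=> y [x Lx <-] ynz; rewrite hL in Lx; case: Lx => z xz.
  pose zf := fun i => z 0 i.
  have xE : x = \sum_i (zf i)%:~R *: row i E.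
    by rewrite xz mulmx_sum_row; apply: eq_bigr => i _; rewrite mxE.
  have tR : dotp x v1 = (\sum_i zf i)%:~R.
    by rewrite xE (@dotp_comb_v1 R n E v1 a h hE) rmorph_sum.
  have dxx : dotp x x = (a + h) * (\sum_i zf i ^+ 2)%:~R - h * (\sum_i zf i)%:~R ^+ 2.
    rewrite xE (@dotp_comb R n E v1 a h hE) !rmorph_sum /=.
    by congr (_ * _ - _); apply: eq_bigr => i _; rewrite rmorphXn.
  case: (pickP (fun i => zf i != 0)) => [i hi | hall]; last first.
    move: ynz; rewrite xE big1 => [|j _]; last by move: (hall j) => /= /negbFE /eqP ->; rewrite scale0r.
    rewrite /twist scaler0 add0r (_ : dotp 0 v1 = 0) ?mulr0 ?scale0r ?eqxx //.
    by rewrite /dotp big1 // => j _; rewrite mxE mul0r.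
  set q := \sum_i zf i ^+ 2 in dxx.
  set t := \sum_i zf i in tR dxx.
  have hk := @key_ineq R N A M (q%:~R) ((t%:~R) ^+ 2) N2 hA hM hAM hMA (sqr_ge0 _).
  have CS' : (t%:~R : R) ^+ 2 <= N * q%:~R.
    have := @CS n zf; rewrite -/q -/t -(ler_int R) rmorphXn rmorphM rmorph_nat.
    by [].
  have tq' : (t%:~R : R) ^+ 2 <= q%:~R ^+ 2.
    have := @tq n zf; rewrite -/q -/t -(ler_int R) !rmorphXn /=.
    by [].
  have q1 : (1 : R) <= q%:~R by have := @q_ge1 n zf i hi; rewrite -/q -(ler_int R).
  have alt : 1 <= (t%:~R : R) ^+ 2 \/ 2 <= (q%:~R : R).
    case: (eqVneq t 0) => ht.
      by right; have := @q_ge2 n zf i hi ht; rewrite -/q -(ler_int R).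
    left; have h1 := @int_sq_ge1 t ht.
    by move: h1; rewrite -(ler_int R) rmorphXn rmorph1.
  have := hk CS' tq' q1 alt.
  have eyy : N * dotp (twist r s v1 x) (twist r s v1 x) = N * A * q%:~R + (t%:~R) ^+ 2 * (M - A).
    by rewrite twist_norm dxx tR vv /A /M mR ha; ring.
  rewrite -eT0 -eyy ler_pM2l //.
have lam : lambda1 (twisted_lattice r s v1 L) = Num.sqrt T0.
  rewrite /lambda1; set S := [set vnorm x | x in _ `\ 0].
  have S_y0 : S (Num.sqrt T0).
    exists y0; last by rewrite /vnorm dy0.
    by split => //; apply/eqP.
  have lbS : lbound S (Num.sqrt T0).
    move=> _ [y [Ly ynz] <-]; rewrite /vnorm ler_sqrt ?dotp_ge0 //.
    by apply: lb => //; apply/eqP.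
  apply/eqP; rewrite eq_le; apply/andP; split.
    by apply: (ge_inf (ex_intro _ _ lbS)).
  by apply: lb_le_inf => //; exists (Num.sqrt T0).
have powR_half : forall (x : R) k, 0 <= x -> x `^ (k%:R / 2) = Num.sqrt x ^+ k.
  move=> x k x0; rewrite mulrC powRrM powR12_sqrt // powR_mulrn // sqrtr_ge0.
have eN : (N - 1) * (a + h) * r%:~R ^+ 2 + m%:~R ^+ 2 = N * T0 by rewrite eT0 /A /M mulrA.
have eN1 : N - 1 = (n.-1)%:R by rewrite /N {1}nS mulrSr addrK.
rewrite /center_density lam covE detE eN powRM ?(ltW N0) ?(ltW T0pos) //.
rewrite (powR_half N n) ?(ltW N0) // (powR_half T0 n) ?(ltW T0pos) //.
rewrite eN1 (powR_half (a + h) n.-1) ?(ltW cpos) //.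
have P0 : Num.sqrt N ^+ n != 0 by rewrite expf_neq0 // gt_eqF // sqrtr_gt0.
have X0 : `|(m%:~R : R) * r%:~R ^+ n.-1| != 0 by rewrite gt_eqF // normr_gt0 mulf_neq0 // expf_neq0.
have S0 : Num.sqrt (a + h) ^+ n.-1 != 0 by rewrite expf_neq0 // gt_eqF // sqrtr_gt0.
have T0' : 2 ^+ n != 0 :> R by rewrite expf_neq0 // pnatr_eq0.
field.
by rewrite X0 S0 P0 T0'.
Qed.
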